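(* Let $\mathcal P=(Q,T)$ be a replicated system and $U\subseteq T$. Then $[\![\mathrm{disa}(U)]\!]=[\![\mathrm{dead}(U)]\!]$ if and only if $$\bigwedge_{t\in T}\ \bigwedge_{u\in U}\ \bigvee_{u'\in U}\ \mathrm{pre}(t)+(\mathrm{pre}(u)\mathbin{\dot-}\mathrm{post}(t))\ \ge\ \mathrm{pre}(u'),$$ where $(\vec x\mathbin{\dot-}\vec y)(q)=\max(\vec x(q)-\vec y(q),0)$ for $\vec x,\vec y\in\mathbb N^Q$.
   Context: A replicated system of arity $n$ is $\mathcal P=(Q,T)$ with $Q$ finite and $T\subseteq\bigcup_{k=0}^n Q^{(k)}\times Q^{(k)}$ ($Q^{(k)}$: multisets over $Q$ of size $k$) containing all silent transitions $(\vec x,\vec x)$. For $t=(\vec x,\vec y)$: $\mathrm{pre}(t)=\vec x$, $\mathrm{post}(t)=\vec y$, $\Delta(t)=\vec y-\vec x$. Configurations are $C\in\mathbb N^Q$; $t$ is enabled at $C$ if $C\ge\mathrm{pre}(t)$ (componentwise) and then $C\xrightarrow{t}C+\Delta(t)$. A transition is dead at $C$ if it is disabled at every configuration reachable from $C$ (including $C$). $[\![\mathrm{disa}(U)]\!]$ is the set of configurations at which all transitions of $U$ are disabled; $[\![\mathrm{dead}(U)]\!]$ is the set of configurations at which all transitions of $U$ are dead. *)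

(* Defs.v *)
From mathcomp Require Import all_boot.
From Stdlib Require Import Relations.
Set Implicit Arguments. Unset Strict Implicit. Unset Printing Implicit Defensive.

(* Multisets over Q (also configurations N^Q). *)
Definition mset (Q : finType) := {ffun Q -> nat}.
Definition msize (Q : finType) (x : mset Q) : nat := \sum_(q : Q) x q.

Definition trans (Q : finType) := (mset Q * mset Q)%type.
Definition pre (Q : finType) (t : trans Q) : mset Q := t.1.
Definition post (Q : finType) (t : trans Q) : mset Q := t.2.

(* (Q,T) is a replicated system of arity n: every transition is in
   Q^(k) x Q^(k) for some k <= n, and all silent transitions (x,x) with
   |x| <= n belong to T.  T is finite (given as a list). *)
Definition replicated (Q : finType) (n : nat) (T : seq (trans Q)) : Prop :=
  (forall t, t \in T -> msize (pre t) = msize (post t) /\ msize (pre t) <= n)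
  /\ (forall x : mset Q, msize x <= n -> (x, x) \in T).

Definition enabled (Q : finType) (C : mset Q) (t : trans Q) : Prop :=
  forall q, pre t q <= C q.

(* C --t--> C + Delta(t) (well defined in N^Q since C >= pre t). *)
Definition fire (Q : finType) (C : mset Q) (t : trans Q) : mset Q :=
  [ffun q => C q - pre t q + post t q].

Definition step (Q : finType) (T : seq (trans Q)) (C C' : mset Q) : Prop :=
  exists t, t \in T /\ enabled C t /\ C' = fire C t.

Definition reach (Q : finType) (T : seq (trans Q)) : relation (mset Q) :=
  clos_refl_trans (mset Q) (step T).

Definition disa (Q : finType) (U : seq (trans Q)) (C : mset Q) : Prop :=
  forall u, u \in U -> ~ enabled C u.

Definition dead (Q : finType) (T U : seq (trans Q)) (C : mset Q) : Prop :=
  forall u, u \in U -> forall C', reach T C C' -> ~ enabled C' u.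

(* Main.v *)
Require Import Defs.
From Stdlib Require Import Relations.
From mathcomp Require Import all_boot.

Theorem proposition11 (Q : finType) (n : nat) (T U : seq (trans Q))
  (hT : replicated n T) (hU : {subset U <= T}) :
  (forall C : mset Q, disa U C <-> dead T U C) <->
  (forall t, t \in T -> forall u, u \in U ->
     exists2 u', u' \in U &
       forall q : Q, pre u' q <= pre t q + (pre u q - post t q)).
Proof.
split.
- move=> H t tT u uU.
  pose C : mset Q := [ffun q => pre t q + (pre u q - post t q)].
  case hh: (has (fun u' => [forall q, pre u' q <= C q]) U).
    move/hasP: hh => [u' u'U /forallP Hu']; exists u' => // q.
    by have := Hu' q; rewrite ffunE.
  exfalso.
  have dC : disa U C.
    move=> u' u'U en; move/negP: hh; apply; apply/hasP; exists u' => //.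
    by apply/forallP => q; apply: en.
  have := (proj1 (H C) dC) u uU (fire C t).
  apply.
    apply: rt_step; exists t; split => //; split => // q.
    by rewrite ffunE leq_addr.
  move=> q; rewrite !ffunE addKn.
  case: (leqP (pre u q) (post t q)) => h.
    by rewrite (eqP (_ : pre u q - post t q == 0)) ?subn_eq0 // add0n.
  by rewrite subnK // ltnW.
- move=> H C; split; last first.
    by move=> D u uU; apply: D uU C (rt_refl _ _ _).
  move=> D u uU C' R; move: D u uU.
  elim: R => [x y [t [tT [en ->]]]|x|x y z _ IH1 _ IH2] Dx.
  + move=> u uU enu.
    have [u' u'U Hu'] := H t tT u uU.
    apply: (Dx u' u'U) => q; apply: leq_trans (Hu' q) _.
    have := enu q; rewrite ffunE => e.
    have := en q => e2.
    rewrite -(subnKC e2) leq_add2l leq_subLR addnC.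
    by rewrite -(leq_add2r (post t q)) in e *; apply: leq_trans e _; rewrite addnC.
  + by [].
  + by move=> u uU; apply: IH2 => //; apply: IH1.
Qed.
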